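(* Let $(\mathrm{Con},\sqsubseteq,(s_i)_{i \in G})$ be a spatial constraint system and let $(\Delta_I)_{I \subseteq G}$ be its distributed spaces. Suppose that $(\mathrm{Con},\sqsubseteq)$ is completely distributive. Let $\delta^+_K:\mathrm{Con} \to \mathrm{Con}$, with $K\subseteq G$, be defined by \[ \delta^+_K(c) = \bigwedge\left\{ \bigsqcup_{k \in K} s_k(a_k) \;\middle|\; (a_k)_{k \in K} \in \mathrm{Con}^K \text{ and } \bigsqcup_{k \in K} a_k \sqsupseteq c \right\}. \] Then $\Delta_K = \delta^+_K$.
   Context: A constraint system is a complete lattice $(\mathrm{Con}, \sqsubseteq)$ with join $\sqcup$ (and $\bigsqcup$ for arbitrary joins), bottom $\mathit{true}$; $\bigwedge$ denotes the greatest lower bound (meet) of a set in $(\mathrm{Con},\sqsubseteq)$, and $c \sqsupseteq d$ means $d \sqsubseteq c$. A space function is a continuous self-map $f:\mathrm{Con}\to\mathrm{Con}$ (preserving joins of directed sets) with $f(\mathit{true})=\mathit{true}$ and $f(c \sqcup d) = f(c) \sqcup f(d)$. A spatial constraint system equips $\mathrm{Con}$ with a space function $s_i$ for each agent $i$ of a possibly infinite set $G$. Space functions are ordered pointwise: $f \sqsubseteq g$ iff $f(c) \sqsubseteq g(c)$ for all $c$; the set of space functions is a complete lattice under this order. The distributed space of a group $I \subseteq G$ is $\Delta_I = \max\{ f \text{ space function} \mid f \sqsubseteq s_i \text{ for every } i \in I\}$. $\mathrm{Con}^K$ is the set of functions $K \to \mathrm{Con}$. Complete distributivity: for any doubly indexed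 family $\{x_{ij}\}_{i\in I, j \in J_i}$, $\bigsqcup_{i\in I}\bigwedge_{j\in J_i} x_{ij} = \bigwedge_{f\in F}\bigsqcup_{i \in I} x_{i f(i)}$, with $F$ the choice functions $f(i)\in J_i$. *)

(* Defs.v *)
Set Implicit Arguments.

Record CompleteLattice := {
  carrier :> Type;
  le : carrier -> carrier -> Prop;
  sup : (carrier -> Prop) -> carrier;
  le_refl : forall x, le x x;
  le_trans : forall x y z, le x y -> le y z -> le x z;
  le_antisym : forall x y, le x y -> le y x -> x = y;
  sup_ub : forall (S : carrier -> Prop) x, S x -> le x (sup S);
  sup_least : forall (S : carrier -> Prop) y,
      (forall x, S x -> le x y) -> le (sup S) y
}.

Section Defs.
Variable L : CompleteLattice.

Definition join (a b : L) : L := sup L (fun x => x = a \/ x = b).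
Definition bot : L := sup L (fun _ => False).
Definition inf (S : L -> Prop) : L := sup L (fun y => forall x, S x -> le L y x).

Definition bigsup (I : Type) (F : I -> L) : L := sup L (fun x => exists i, x = F i).
Definition biginf (I : Type) (F : I -> L) : L := inf (fun x => exists i, x = F i).

Definition directed (D : L -> Prop) : Prop :=
  (exists x, D x) /\
  forall x y, D x -> D y -> exists z, D z /\ le L x z /\ le L y z.

Definition continuous (f : L -> L) : Prop :=
  forall D, directed D -> f (sup L D) = sup L (fun y => exists x, D x /\ y = f x).

Definition space_function (f : L -> L) : Prop :=
  continuous f /\ f bot = bot /\ forall c d, f (join c d) = join (f c) (f d).

Definition fle (f g : L -> L) : Prop := forall c, le L (f c) (g c).

Definition completely_distributive : Prop :=
  forall (I : Type) (J : I -> Type) (x : forall i, J i -> L),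
    bigsup (fun i => biginf (x i)) =
    biginf (fun f : (forall i, J i) => bigsup (fun i => x i (f i))).

Definition is_distributed_space (G : Type) (s : G -> L -> L)
    (I : G -> Prop) (D : L -> L) : Prop :=
  (space_function D /\ forall i, I i -> fle D (s i)) /\
  forall f, space_function f -> (forall i, I i -> fle f (s i)) -> fle f D.

Definition delta_plus (G : Type) (s : G -> L -> L) (K : G -> Prop) (c : L) : L :=
  inf (fun v => exists a : {k : G | K k} -> L,
         v = bigsup (fun k => s (proj1_sig k) (a k)) /\
         le L c (bigsup a)).

End Defs.

Arguments space_function {L} f.
Arguments is_distributed_space {L G} s I D.
Arguments delta_plus {L G} s K c.
Arguments fle {L} f g.

(* Main.v *)
Require Import Defs.
From Stdlib Require Import List.

Section Aux.
Variable L : CompleteLattice.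
Notation le := (le L).

Lemma bot_le (x : L) : le (bot L) x.
Proof. apply sup_least. intros y []. Qed.
Lemma join_l (a b : L) : le a (join L a b).
Proof. apply sup_ub. left; reflexivity. Qed.
Lemma join_r (a b : L) : le b (join L a b).
Proof. apply sup_ub. right; reflexivity. Qed.
Lemma join_least (a b z : L) : le a z -> le b z -> le (join L a b) z.
Proof. intros Ha Hb. apply sup_least. intros x [-> | ->]; assumption. Qed.
Lemma join_mono (a b c d : L) : le a c -> le b d -> le (join L a b) (join L c d).
Proof. intros; apply join_least; eapply le_trans; eauto using join_l, join_r. Qed.
Lemma inf_lb (S : L -> Prop) x : S x -> le (inf L S) x.
Proof. intros Hx. apply sup_least. intros y Hy. apply Hy, Hx. Qed.
Lemma inf_glb (S : L -> Prop) y : (forall x, S x -> le y x) -> le y (inf L S).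
Proof. intros H. apply sup_ub. exact H. Qed.
Lemma bigsup_ub I (F : I -> L) i : le (F i) (bigsup L F).
Proof. apply sup_ub. exists i; reflexivity. Qed.
Lemma bigsup_least I (F : I -> L) z : (forall i, le (F i) z) -> le (bigsup L F) z.
Proof. intros H. apply sup_least. intros x [i ->]. apply H. Qed.
Lemma biginf_lb I (F : I -> L) i : le (biginf L F) (F i).
Proof. apply inf_lb. exists i; reflexivity. Qed.
Lemma biginf_glb I (F : I -> L) y : (forall i, le y (F i)) -> le y (biginf L F).
Proof. intros H. apply inf_glb. intros x [i ->]. apply H. Qed.

Lemma sf_mono (f : L -> L) c d : space_function f -> le c d -> le (f c) (f d).
Proof.
  intros [_ [_ Hj]] H.
  assert (E : join L c d = d).
  { apply le_antisym. apply join_least; [exact H | apply le_refl]. apply join_r. }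
  rewrite <- E, Hj. apply join_l.
Qed.

Definition fj (l : list L) : L := fold_right (fun a r => join L a r) (bot L) l.

Lemma fj_app_l l1 l2 : le (fj l1) (fj (l1 ++ l2)).
Proof.
  induction l1 as [|a l1 IH]; simpl. apply bot_le.
  apply join_mono; [apply le_refl | exact IH].
Qed.
Lemma fj_app_r l1 l2 : le (fj l2) (fj (l1 ++ l2)).
Proof.
  induction l1 as [|a l1 IH]; simpl. apply le_refl.
  eapply le_trans; [exact IH | apply join_r].
Qed.

Lemma sf_sup (f : L -> L) (S : L -> Prop) z :
  space_function f -> (forall x, S x -> le (f x) z) -> le (f (sup L S)) z.
Proof.
  intros Hf H.
  set (D := fun y => exists l, Forall S l /\ y = fj l).
  assert (HD : directed L D).
  { split. exists (bot L). exists nil. split; [constructor | reflexivity].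
    intros x y [l1 [H1 ->]] [l2 [H2 ->]]. exists (fj (l1 ++ l2)).
    split. exists (l1 ++ l2). split; [apply Forall_app; auto | reflexivity].
    split; [apply fj_app_l | apply fj_app_r]. }
  assert (Hle : le (sup L S) (sup L D)).
  { apply sup_least. intros x Sx. eapply le_trans; [apply (join_l x (bot L)) |].
    apply sup_ub. exists (x :: nil). split; [constructor; auto | reflexivity]. }
  eapply le_trans; [apply (sf_mono _ _ _ Hf Hle) |].
  destruct Hf as [Hc [Hb Hj]]. rewrite (Hc D HD).
  apply sup_least. intros y [x [[l [Hl ->]] ->]].
  induction Hl as [|a l Ha Hl IH]; simpl.
  - rewrite Hb. apply bot_le.
  - rewrite Hj. apply join_least; auto.
Qed.

End Aux.
Arguments bigsup_ub L [I] F i.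
Arguments bigsup_least L [I] F z _.
Arguments biginf_lb L [I] F i.
Arguments biginf_glb L [I] F y _.

Theorem mainTheorem7 (L : CompleteLattice) (G : Type) (s : G -> L -> L)
    (Hs : forall i, space_function (s i))
    (Hcd : completely_distributive L)
    (K : G -> Prop) :
  is_distributed_space s K (delta_plus s K).
Proof.
  set (KT := {k : G | K k}).
  set (V := fun a : KT -> L => bigsup L (fun k : KT => s (proj1_sig k) (a k))).
  assert (Hdl : forall c a, le L c (bigsup L a) -> le L (delta_plus s K c) (V a)).
  { intros c a H. apply inf_lb. exists a. split; [reflexivity | exact H]. }
  assert (Hmono : forall c d, le L c d -> le L (delta_plus s K c) (delta_plus s K d)).
  { intros c d H. apply inf_glb. intros v [a [-> Ha]].
    apply Hdl. eapply le_trans; eauto. }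
  assert (Hbi : forall c, le L (biginf L (fun j : {a : KT -> L | le L c (bigsup L a)} => V (proj1_sig j)))
                          (delta_plus s K c)).
  { intros c. apply inf_glb. intros v [a [-> Ha]].
    apply (biginf_lb L (fun j : {a : KT -> L | le L c (bigsup L a)} => V (proj1_sig j))
                     (exist _ a Ha)). }
  split; [split|].
  - split; [|split].
    +
      intros D HD. apply le_antisym.
      * set (I := {x : L | D x}).
        set (J := fun i : I => {a : KT -> L | le L (proj1_sig i) (bigsup L a)}).
        set (X := fun (i : I) (j : J i) => V (proj1_sig j)).
        eapply le_trans with (biginf L (fun f : (forall i, J i) => bigsup L (fun i => X i (f i)))).
        { apply biginf_glb. intros f.
          set (b := fun k : KT => bigsup L (fun i : I => proj1_sig (f i) k)).
          eapply le_trans; [apply (Hdl _ b) |].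
          - apply sup_least. intros x Dx.
            eapply le_trans; [exact (proj2_sig (f (exist _ x Dx))) |].
            apply bigsup_least. intros k. eapply le_trans; [| apply (bigsup_ub L _ k)].
            unfold b. apply (bigsup_ub L (fun i : I => proj1_sig (f i) k) (exist _ x Dx)).
          - apply bigsup_least. intros k. unfold b, bigsup at 1.
            apply sf_sup; [apply Hs |]. intros y [i ->].
            eapply le_trans; [| apply (bigsup_ub L _ i)]. unfold X, V.
            apply (bigsup_ub L (fun k0 : KT => s (proj1_sig k0) (proj1_sig (f i) k0)) k). }
        rewrite <- (Hcd I J X). apply bigsup_least. intros i.
        eapply le_trans; [apply Hbi |]. apply sup_ub. exists (proj1_sig i).
        split; [exact (proj2_sig i) | reflexivity].
      * apply sup_least. intros y [x [Dx ->]]. apply Hmono. apply sup_ub; exact Dx.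
    + apply le_antisym; [| apply bot_le].
      eapply le_trans; [apply (Hdl _ (fun _ => bot L)); apply bot_le |].
      apply bigsup_least. intros k. destruct (Hs (proj1_sig k)) as [_ [Hb _]].
      rewrite Hb. apply le_refl.
    + intros c d. apply le_antisym.
      * set (J := fun b : bool => {a : KT -> L | le L (if b then c else d) (bigsup L a)}).
        set (X := fun (b : bool) (j : J b) => V (proj1_sig j)).
        eapply le_trans with (biginf L (fun f : (forall b, J b) => bigsup L (fun b => X b (f b)))).
        { apply biginf_glb. intros f.
          destruct (f true) as [a Ha] eqn:Ea. destruct (f false) as [a' Ha'] eqn:Eb.
          eapply le_trans; [apply (Hdl _ (fun k => join L (a k) (a' k))) |].
          - apply join_least.
            + eapply le_trans; [exact Ha |]. apply bigsup_least; intros k.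
              eapply le_trans; [| apply (bigsup_ub L _ k)]. apply join_l.
            + eapply le_trans; [exact Ha' |]. apply bigsup_least; intros k.
              eapply le_trans; [| apply (bigsup_ub L _ k)]. apply join_r.
          - apply bigsup_least. intros k. destruct (Hs (proj1_sig k)) as [_ [_ Hj]].
            rewrite Hj. apply join_least.
            + eapply le_trans; [| apply (bigsup_ub L _ true)]. unfold X. rewrite Ea.
              apply (bigsup_ub L (fun k0 : KT => s (proj1_sig k0) (a k0)) k).
            + eapply le_trans; [| apply (bigsup_ub L _ false)]. unfold X. rewrite Eb.
              apply (bigsup_ub L (fun k0 : KT => s (proj1_sig k0) (a' k0)) k). }
        rewrite <- (Hcd bool J X). apply bigsup_least. intros [|].
        -- eapply le_trans; [apply (Hbi c) | apply join_l].
        -- eapply le_trans; [apply (Hbi d) | apply join_r].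
      * apply join_least; apply Hmono; [apply join_l | apply join_r].
  - intros i Hi c.
    set (a := fun k : KT => sup L (fun x => x = c /\ proj1_sig k = i)).
    eapply le_trans; [apply (Hdl _ a) |].
    + eapply le_trans; [| apply (bigsup_ub L a (exist _ i Hi))].
      apply sup_ub. split; reflexivity.
    + apply bigsup_least. intros k. apply sf_sup; [apply Hs |].
      intros x [-> <-]. apply le_refl.
  - intros f Hf Hfs c. apply inf_glb. intros v [a [-> Ha]].
    eapply le_trans; [apply (sf_mono _ _ _ _ Hf Ha) |].
    apply sf_sup; [exact Hf |]. intros x [k ->].
    eapply le_trans; [apply (Hfs _ (proj2_sig k)) |].
    apply (bigsup_ub L (fun k0 : KT => s (proj1_sig k0) (a k0)) k).
Qed.
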